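(* Let $P$ be a negative-stable standard TSS in decent ntytt format. Then every standard ntytt rule irredundantly provable from $P$ is negative-stable.
   Context: Actions $A\cup\{\tau\}$, $\tau\notin A$. Literals $t\xrightarrow{\alpha}u$ (positive) and $t\not\xrightarrow{\alpha}$ (negative) over terms of a signature $\Sigma$ with infinite variable set $V$. A rule $\frac{H}{\lambda}$ has premises $H$ and conclusion $\lambda$ (source = left term of $\lambda$); it is standard if $\lambda$ is positive; a TSS is standard if all its rules are. Irredundant proof of $\frac{H}{\lambda}$ from $P$: well-founded tree of literals, some leaves marked hypothesis, root $\lambda$, $H$ exactly the hypothesis labels, every non-hypothesis node $\mu$ with children labels $K$ such that $\frac{K}{\mu}$ is a substitution instance of a rule of $P$. ntytt rule: right-hand sides of positive premises are distinct variables not occurring in the source. Free variable: occurs neither in source nor in premise right-hand sides; lookahead: a variable occurs in a premise right-hand side and in a premise left-hand side; decent: no lookahead and no free variables. A standard rule $\frac{H}{t\xrightarrow{\alpha}u}$ is negative-stable if for every premise $w\not\xrightarrow{\gamma}$ in $H$, also $w\not\xrightarrow{\tau}$ is in $H$; a TSS is negative-stable if all its rules are. *)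

(* Defs.v *)
From Stdlib Require Import List Fin.
Set Implicit Arguments.

Section TSS.

(* Signature: function symbols F with arities; variables V; actions A.
   Labels are [option A], with [None] playing the role of tau (tau not in A). *)
Context (F : Type) (arity : F -> nat) (V : Type) (A : Type).

Definition label := option A.
Definition tau : label := None.

Inductive term : Type :=
| Var : V -> term
| App : forall f : F, (Fin.t (arity f) -> term) -> term.


Inductive occurs (x : V) : term -> Prop :=
| occ_var : occurs x (Var x)
| occ_app : forall f (c : Fin.t (arity f) -> term) i,
    occurs x (c i) -> occurs x (@App f c).

Fixpoint subst (s : V -> term) (t : term) : term :=
  match t with
  | Var x => s x
  | @App f c => @App f (fun i => subst s (c i))
  end.

(* positive literal t -a-> u, negative literal t -/a-> *)
Inductive literal : Type :=
| Pos : term -> label -> term -> literal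
| Neg : term -> label -> literal.

Definition subst_lit (s : V -> term) (l : literal) : literal :=
  match l with
  | Pos t a u => Pos (subst s t) a (subst s u)
  | Neg t a => Neg (subst s t) a
  end.

Definition lhs (l : literal) : term :=
  match l with Pos t _ _ => t | Neg t _ => t end.

(* A rule H / lambda; premises form a (possibly infinite) set. *)
Record rule : Type := mkRule { prem : literal -> Prop; concl : literal }.

Definition TSS := rule -> Prop.

Definition source (r : rule) : term := lhs (concl r).

Definition standard_rule (r : rule) : Prop :=
  exists t a u, concl r = Pos t a u.

Definition standard_TSS (P : TSS) : Prop :=
  forall r, P r -> standard_rule r.

Definition rule_instance (P : TSS) (K : literal -> Prop) (mu : literal) : Prop :=
  exists r, P r /\ exists s : V -> term,
    mu = subst_lit s (concl r) /\
    (forall k, K k <-> exists h, prem r h /\ k = subst_lit s h).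

Inductive ptree : Type :=
| HypLeaf : literal -> ptree
| Node : literal -> forall I : Type, (I -> ptree) -> ptree.

Definition root (t : ptree) : literal :=
  match t with HypLeaf l => l | @Node l _ _ => l end.

Inductive valid_proof (P : TSS) : ptree -> Prop :=
| vp_hyp : forall l, valid_proof P (HypLeaf l)
| vp_node : forall l (I : Type) (ch : I -> ptree),
    (forall i, valid_proof P (ch i)) ->
    rule_instance P (fun k => exists i, root (ch i) = k) l ->
    valid_proof P (Node l ch).

Inductive hyp_label : ptree -> literal -> Prop :=
| hl_leaf : forall l, hyp_label (HypLeaf l) l
| hl_node : forall l (I : Type) (ch : I -> ptree) i k,
    hyp_label (ch i) k -> hyp_label (Node l ch) k.

Definition irredundantly_provable (P : TSS) (r : rule) : Prop :=
  exists pt : ptree, valid_proof P pt /\ root pt = concl r /\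
    (forall l, prem r l <-> hyp_label pt l).

Definition ntytt_rule (r : rule) : Prop :=
  (forall t a u, prem r (Pos t a u) ->
     exists y, u = Var y /\ ~ occurs y (source r)) /\
  (forall t1 a1 t2 a2 y, prem r (Pos t1 a1 (Var y)) -> prem r (Pos t2 a2 (Var y)) ->
     t1 = t2 /\ a1 = a2).

Definition rhs_var (r : rule) (y : V) : Prop :=
  exists t a, prem r (Pos t a (Var y)).

Definition occurs_lit (x : V) (l : literal) : Prop :=
  match l with
  | Pos t _ u => occurs x t \/ occurs x u
  | Neg t _ => occurs x t
  end.

Definition occurs_rule (x : V) (r : rule) : Prop :=
  occurs_lit x (concl r) \/ exists h, prem r h /\ occurs_lit x h.

Definition has_free_var (r : rule) : Prop :=
  exists x, occurs_rule x r /\ ~ occurs x (source r) /\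
    ~ (exists t a u, prem r (Pos t a u) /\ occurs x u).

Definition has_lookahead (r : rule) : Prop :=
  exists x, (exists t a u, prem r (Pos t a u) /\ occurs x u) /\
            (exists h, prem r h /\ occurs x (lhs h)).

Definition decent_rule (r : rule) : Prop :=
  ~ has_lookahead r /\ ~ has_free_var r.

Definition decent_ntytt_TSS (P : TSS) : Prop :=
  forall r, P r -> ntytt_rule r /\ decent_rule r.

Definition negative_stable_rule (r : rule) : Prop :=
  standard_rule r /\
  forall w g, prem r (Neg w g) -> prem r (Neg w tau).

Definition negative_stable_TSS (P : TSS) : Prop :=
  forall r, P r -> negative_stable_rule r.

End TSS.

(* Main.v *)
Require Import Defs.
From Stdlib Require Import List.

Lemma vp_inv (F : Type) (arity : F -> nat) (V : Type) (A : Type)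
  (P : TSS arity V A) (pt : ptree arity V A) :
  valid_proof P pt ->
  match pt with
  | HypLeaf _ => True
  | Node l ch => (forall i, valid_proof P (ch i)) /\
      rule_instance P (fun k => exists i, root (ch i) = k) l
  end.
Proof. destruct 1; auto. Qed.

Lemma key (F : Type) (arity : F -> nat) (V : Type) (A : Type)
  (P : TSS arity V A) :
  standard_TSS P -> negative_stable_TSS P ->
  forall pt k, hyp_label pt k -> valid_proof P pt ->
  forall w g, k = Neg w g ->
  pt = HypLeaf (Neg w g) \/ hyp_label pt (Neg w (tau A)).
Proof.
  intros HS HN pt k H. induction H as [l | l I ch i k Hk IH]; intros Hv w g Ek.
  - subst; left; reflexivity.
  - right. apply vp_inv in Hv. destruct Hv as [Hch [rho [Prho [s [Hmu HK]]]]].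
    destruct (IH (Hch i) w g Ek) as [Ei | Hi].
    + assert (Hk' : exists j, root (ch j) = Neg w g) by (exists i; rewrite Ei; reflexivity).
      apply HK in Hk'. destruct Hk' as [h [Ph Eh]].
      destruct h as [t a u | w' g']; simpl in Eh; [discriminate|].
      injection Eh as Ew Eg. subst.
      destruct (HN rho Prho) as [_ Hns].
      assert (Ht : exists j, root (ch j) = Neg (subst s w') (tau A)).
      { apply HK. exists (Neg w' (tau A)). split; [apply Hns with g'; exact Ph | reflexivity]. }
      destruct Ht as [j Hj].
      apply hl_node with (i := j).
      pose proof (Hch j) as Vj.
      destruct (ch j) as [l' | l' J ch'] eqn:Ej; simpl in Hj.
      * subst; constructor.
      * subst l'. apply vp_inv in Vj. destruct Vj as [_ [rho' [P' [s' [Hm _]]]]].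
        destruct (HS rho' P') as [t0 [a0 [u0 Ec]]]. rewrite Ec in Hm. discriminate.
    + apply hl_node with (i := i). exact Hi.
Qed.

Theorem mainTheorem12 (F : Type) (arity : F -> nat) (V : Type) (A : Type)
  (V_infinite : forall l : list V, exists x : V, ~ In x l)
  (P : TSS arity V A) :
  standard_TSS P ->
  negative_stable_TSS P ->
  decent_ntytt_TSS P ->
  forall r : rule arity V A,
    standard_rule r -> ntytt_rule r -> irredundantly_provable P r ->
    negative_stable_rule r.
Proof.
  intros HS HN _ r Hr _ [pt [Hv [Hroot Hprem]]].
  split; [exact Hr|].
  intros w g Hp. apply Hprem in Hp.
  destruct (@key _ _ _ _ P HS HN _ _ Hp Hv _ _ eq_refl) as [E | H].
  - subst pt. simpl in Hroot. destruct Hr as [t [a [u Ec]]]. rewrite Ec in Hroot. discriminate.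
  - apply Hprem. exact H.
Qed.
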